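(* Let $(k_i)_{i\in\mathbb N}\subset\mathbb N$ be the coding sequence of an interval translation map of infinite type. Then the $S$-adic subshift $(X,\sigma)$ based on the substitutions $(\chi_{k_i})_{i\in\mathbb N}$ is primitive, combinatorially recognizable and aperiodic.
   Context: Coding sequences of infinite-type maps in the family $T_{\alpha,\beta}(x)=x+\alpha$ on $[0,1-\alpha)$, $x+\beta$ on $[1-\alpha,1-\beta)$, $x-1+\beta$ on $[1-\beta,1]$ ($0<\beta\le\alpha\le1$) are exactly the sequences $(k_i)$ in $\mathbb N=\{1,2,\dots\}$ with $k_{2i}>1$ for infinitely many $i$ and $k_{2i-1}>1$ for infinitely many $i$. For $k\in\mathbb N$, $\chi_k$ is the substitution on $\{1,2,3\}$: $1\mapsto2$, $2\mapsto31^k$, $3\mapsto31^{k-1}$. An $S$-adic subshift based on substitutions $\chi_i:\mathcal A_i\to\mathcal A_{i-1}^+$ (here all alphabets are $\{1,2,3\}$ and $\chi_i=\chi_{k_i}$) is the shift-orbit closure $X$ of the set of accumulation points of $\{\chi_1\circ\cdots\circ\chi_n(a): n\in\mathbb N, a\in\mathcal A_n\}$; for $i\ge1$ let $X_i$ denote the $S$-adic subshift based on $(\chi_j)_{j\ge i}$. It is primitive if for every $m$ there is $n\ge m$ such that for all $a\in\mathcal A_n$ the word $\chi_m\circ\cdots\circ\chi_n(a)$ contains every letter of $\mathcal A_{m-1}$. A substitution $\chi$, relative to a subshift $Y$, is combinatorially recognizable if there is $N$ such that for every word $w$ occurring in $Y$ with $|w|\ge N$ and every word $v=v_1\cdots v_n$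 such that $w$ occurs twice in $\chi(v)$, the first occurrence of $w$ starts at a position of the form $|\chi(v_1\cdots v_i)|$ (some $0\le i<n$) if and only if the second occurrence starts at a position of the form $|\chi(v_1\cdots v_j)|$ (some $0\le j<n$). The $S$-adic subshift is combinatorially recognizable if each $\chi_i$ is combinatorially recognizable relative to $X_i$ (with $N$ allowed to depend on $i$). It is aperiodic if there is no $x\in X$ and $k\in\mathbb N$ with $\sigma^k x=x$. *)

(* Defs.v *)
From HB Require Import structures.
From mathcomp Require Import all_boot.
Set Implicit Arguments. Unset Strict Implicit. Unset Printing Implicit Defensive.

Inductive letter := l1 | l2 | l3.

Definition letter_eqb (a b : letter) : bool :=
  match a, b with
  | l1, l1 | l2, l2 | l3, l3 => true
  | _, _ => false
  end.

Lemma letter_eqP : Equality.axiom letter_eqb.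
Proof. by case; case; constructor. Qed.

HB.instance Definition _ := hasDecEq.Build letter letter_eqP.

Definition subst := letter -> seq letter.
Definition subst_word (s : subst) (w : seq letter) : seq letter :=
  flatten (map s w).

Definition chi (k : nat) : subst := fun a =>
  match a with
  | l1 => [:: l2]
  | l2 => l3 :: nseq k l1
  | l3 => l3 :: nseq k.-1 l1
  end.

Fixpoint block (tau : nat -> subst) (m l : nat) (w : seq letter) : seq letter :=
  match l with
  | 0 => w
  | l'.+1 => subst_word (tau m) (block tau m.+1 l' w)
  end.

(* comp_range tau m n a = tau_m o ... o tau_n (a)   (for m <= n) *)
Definition comp_range (tau : nat -> subst) (m n : nat) (a : letter) : seq letter :=
  block tau m (n.+1 - m) [:: a].

Definition sequence := nat -> letter.

Definition factor (x : sequence) (j len : nat) : seq letter :=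
  mkseq (fun t => x (j + t)) len.

(* x is an accumulation point (in A^* u A^N with the prefix topology) of
   { tau_i o ... o tau_n (a) : n >= i, a in A }. *)
Definition accumulation_point (tau : nat -> subst) (i : nat) (x : sequence) : Prop :=
  forall m, exists n a, i <= n /\ prefix (factor x 0 m) (comp_range tau i n a).

(* X_i : the shift-orbit closure (product topology) of the set of accumulation
   points; this is the S-adic subshift based on (tau_j)_{j >= i}. *)
Definition sadic_subshift (tau : nat -> subst) (i : nat) (y : sequence) : Prop :=
  forall m, exists x j, accumulation_point tau i x /\ factor y 0 m = factor x j m.

Definition occurs_in (Y : sequence -> Prop) (w : seq letter) : Prop :=
  exists y j, Y y /\ factor y j (size w) = w.

Definition occurs_at (w u : seq letter) (p : nat) : Prop :=
  p + size w <= size u /\ take (size w) (drop p u) = w.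

Definition cut_position (s : subst) (v : seq letter) (p : nat) : Prop :=
  exists i, i < size v /\ p = size (subst_word s (take i v)).

Definition comb_recognizable_rel (s : subst) (Y : sequence -> Prop) : Prop :=
  exists N, forall w, occurs_in Y w -> N <= size w ->
    forall (v : seq letter) (p q : nat),
      occurs_at w (subst_word s v) p -> occurs_at w (subst_word s v) q ->
      (cut_position s v p <-> cut_position s v q).

Definition sadic_primitive (tau : nat -> subst) : Prop :=
  forall m, 1 <= m -> exists n, m <= n /\
    forall a b : letter, b \in comp_range tau m n a.

Definition sadic_comb_recognizable (tau : nat -> subst) : Prop :=
  forall i, 1 <= i -> comb_recognizable_rel (tau i) (sadic_subshift tau i).

Definition sadic_aperiodic (tau : nat -> subst) : Prop :=
  ~ exists (x : sequence) (k : nat),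
      sadic_subshift tau 1 x /\ 0 < k /\ forall t, x (k + t) = x t.

Definition infinite_type_coding (k : nat -> nat) : Prop :=
  (forall i, 1 <= i -> 1 <= k i) /\
  (forall N, exists i, N <= i /\ 1 <= i /\ ~~ odd i /\ 1 < k i) /\
  (forall N, exists i, N <= i /\ odd i /\ 1 < k i).

(* Main.v *)
Require Import Defs.
From mathcomp Require Import all_boot zify.
Set Implicit Arguments. Unset Strict Implicit.

Definition good (s : subst) := forall a, exists h t, s a = h :: t /\ h != l1 /\ all (fun c => c == l1) t.
Definition ok (C : seq letter) := head l2 C != l1.

Lemma chi_good k : good (chi k).
Proof.
case.
- by exists l2, [::].
- by exists l3, (nseq k l1); rewrite all_nseq eqxx orbT.
- by exists l3, (nseq k.-1 l1); rewrite all_nseq eqxx orbT.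
Qed.

Lemma sw_cons s a w : subst_word s (a :: w) = s a ++ subst_word s w.
Proof. by []. Qed.
Lemma sw_nil s : subst_word s [::] = [::].
Proof. by []. Qed.
Lemma sw_cat s w1 w2 : subst_word s (w1 ++ w2) = subst_word s w1 ++ subst_word s w2.
Proof. by rewrite /subst_word map_cat flatten_cat. Qed.

Lemma catIl (T : Type) (s a b : seq T) : s ++ a = s ++ b -> a = b.
Proof. by move=> /(congr1 (drop (size s))); rewrite !drop_size_cat. Qed.

Lemma ok_cat X Y : ok X -> X != [::] -> ok (X ++ Y).
Proof. by case: X. Qed.

Section Good.
Variable s : subst.
Hypothesis Hs : good s.

Lemma good_ne a : s a != [::].
Proof. by have [h [t [-> _]]] := Hs a. Qed.

Lemma ok_sw w : ok (subst_word s w).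
Proof.
case: w => [|a w] //; rewrite sw_cons.
have [h [t [-> [H _]]]] := Hs a. by [].
Qed.

Lemma tail_one a j : 0 < j < size (s a) -> nth l2 (s a) j = l1.
Proof.
have [h [t [-> [_ /allP Ht]]]] := Hs a.
case: j => [|j] // /andP [_]; rewrite /= ltnS => Hj.
by apply/eqP/Ht; apply: mem_nth.
Qed.

Lemma nth_head_ne a : nth l2 (s a) 0 != l1.
Proof. by have [h [t [-> [H _]]]] := Hs a. Qed.

Lemma split_long a A X Y : s a ++ X = A ++ Y -> size (s a) <= size A ->
  A = s a ++ drop (size (s a)) A.
Proof.
move=> E hA.
have: take (size (s a)) (s a ++ X) = take (size (s a)) (A ++ Y) by rewrite E.
rewrite take_size_cat // takel_cat // => H.
by rewrite -[in LHS](cat_take_drop (size (s a)) A) -H.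
Qed.

Lemma cutL v A C : subst_word s v = A ++ C -> ok C ->
  exists v1 v2, v = v1 ++ v2 /\ subst_word s v1 = A /\ subst_word s v2 = C.
Proof.
elim: v A C => [|a v IH] A C.
  rewrite sw_nil; case: A => [|x A]; case: C => [|y C] //= _ _.
  by exists [::], [::].
rewrite sw_cons => E okC.
case: (leqP (size (s a)) (size A)) => hA.
  have eA := split_long E hA.
  move: E; rewrite {1}eA -catA => /catIl E.
  have [v1 [v2 [-> [E1 E2]]]] := IH _ _ E okC.
  exists (a :: v1), v2; split => //; split => //.
  by rewrite sw_cons E1 -eA.
case: A E hA => [|x A] E hA.
  by exists [::], (a :: v).
exfalso.
case: C E okC => [|c C] E okC.
  have := congr1 size E; rewrite cats0 size_cat /= => H.
  move: hA; rewrite /= => hA. lia.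
have := congr1 (fun w => nth l2 w (size (x :: A))) E.
rewrite nth_cat hA tail_one; last by rewrite hA.
rewrite nth_cat ltnn subnn /= => H.
by move: okC; rewrite /ok /= -H.
Qed.

Lemma runB K : (forall a, size (s a) <= K.+1) ->
  forall v A B m, subst_word s v = A ++ nseq m l1 ++ B -> m <= K.
Proof.
move=> HK; elim=> [|a v IH] A B m.
  rewrite sw_nil => /(congr1 size); rewrite !size_cat size_nseq /=. lia.
rewrite sw_cons => E.
case: (leqP (size (s a)) (size A)) => hA.
  have eA := split_long E hA.
  move: E; rewrite {1}eA -catA => /catIl E.
  exact: IH E.
rewrite leqNgt; apply/negP => Km.
case: A E hA => [|x A] E hA.
  have := congr1 (fun w => nth l2 w 0) E.
  rewrite /= nth_cat.
  have -> : 0 < size (s a) by case: (s a) (good_ne a).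
  move=> H; have := nth_head_ne a; rewrite H.
  case: m Km {E H} => [|m] //= _. 
case: (leqP (size (x :: A) + m) (size (s a))) => hm.
  have := HK a. move: hm => /=. lia.
have := congr1 (fun w => nth l2 w (size (s a))) E.
rewrite nth_cat ltnn subnn nth0 nth_cat ltnNge (ltnW hA) /= nth_cat size_nseq.
have -> : size (s a) - (size A).+1 < m by move: hA hm => /=; lia.
rewrite nth_nseq.
have -> : size (s a) - (size A).+1 < m by move: hA hm => /=; lia.
move=> H; have := ok_sw v; by rewrite /ok H.
Qed.

Lemma swI : injective s -> injective (subst_word s).
Proof.
move=> Hinj; elim=> [|a x IH] [|b y] //.
- by rewrite sw_nil sw_cons => /(congr1 size); rewrite size_cat; case: (s b) (good_ne b).
- by rewrite sw_nil sw_cons => /(congr1 size); rewrite size_cat; case: (s a) (good_ne a).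
rewrite !sw_cons => E.
have key : forall a b X Y, s a ++ X = s b ++ Y -> ok X -> size (s a) < size (s b) -> False.
  move=> a' b' X Y E' okX hl.
  case: X E' okX => [|c X] E' okX.
    by have := congr1 size E'; rewrite cats0 size_cat; lia.
  have := congr1 (fun w => nth l2 w (size (s a'))) E'.
  rewrite nth_cat ltnn subnn nth_cat hl tail_one; last first.
    by rewrite hl andbT; case: (s a') (good_ne a').
  by move=> /= H; move: okX; rewrite /ok /= H.
have hs : size (s a) = size (s b).
  case: (ltngtP (size (s a)) (size (s b))) => // h.
  - by exfalso; apply: key E (ok_sw _) h.
  - by exfalso; apply: key (esym E) (ok_sw _) h.
have eab : s a = s b.
  by have := congr1 (take (size (s a))) E; rewrite take_size_cat // hs take_size_cat.
move: E; rewrite eab => /catIl /IH ->.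
by rewrite (Hinj _ _ eab).
Qed.

Lemma size_take_sw v i : i < size v -> size (subst_word s (take i v)) < size (subst_word s v).
Proof.
move=> hi.
rewrite -{2}(cat_take_drop i v) sw_cat size_cat -{1}[size (subst_word s (take i v))]addn0 ltn_add2l.
have : drop i v != [::] by by rewrite -size_eq0 size_drop subn_eq0 -ltnNge.
case: (drop i v) => [|b w] // _; rewrite sw_cons size_cat.
by case: (s b) (good_ne b).
Qed.

Lemma cut_char v p : p < size (subst_word s v) ->
  cut_position s v p <-> nth l2 (subst_word s v) p != l1.
Proof.
elim: v p => [|a v IH] p //.
rewrite sw_cons size_cat => hp; split.
- case=> [[|i]] [hi ->].
    rewrite /= nth_cat.
    have -> : 0 < size (s a) by case: (s a) (good_ne a).
    exact: nth_head_ne.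
  rewrite /= sw_cons size_cat nth_cat ltnNge leq_addr /= addKn.
  apply/IH; last by exists i.
  move: hi => /= hi; rewrite ltnS in hi.
  rewrite -{2}(cat_take_drop i v) sw_cat size_cat -{1}[size _]addn0 ltn_add2l.
  have : drop i v != [::] by by rewrite -size_eq0 size_drop subn_eq0 -ltnNge.
  case: (drop i v) => [|b w] // _; rewrite sw_cons size_cat.
  by case: (s b) (good_ne b).
- rewrite nth_cat; case: ltnP => hpa.
    case: p hp hpa => [|p] hp hpa.
      by move=> _; exists 0; rewrite take0.
    by rewrite tail_one ?eqxx // hpa.
  move=> H.
  have hp' : p - size (s a) < size (subst_word s v) by lia.
  have [i [hi ei]] := (IH _ hp').2 H.
  exists i.+1; split; first by [].
  by rewrite /= sw_cons size_cat -ei subnKC.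
Qed.

End Good.

Lemma chi_inj k : 0 < k -> injective (chi k).
Proof.
move=> hk; case; case => //= /(congr1 size) /=; rewrite !size_nseq; lia.
Qed.

Lemma chi_size k a : size (chi k a) <= k.+1.
Proof. case: a => /=; rewrite ?size_nseq; lia. Qed.

Lemma block_add tau j l1 l2 w :
  block tau j (l1 + l2) w = block tau j l1 (block tau (j + l1) l2 w).
Proof.
elim: l1 j => [|l1 IH] j; first by rewrite addn0.
by rewrite addSn /= IH addSnnS.
Qed.

Lemma pow_succ_r (T : Type) (u : seq T) n :
  flatten (nseq n.+1 u) = flatten (nseq n u) ++ u.
Proof. by rewrite -addn1 nseqD flatten_cat /= cats0. Qed.

Lemma pow_rot (T : eqType) (u : seq T) r n :
  infix (flatten (nseq n (rot r u))) (flatten (nseq n.+1 u)).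
Proof.
have claim : forall (A D : seq T) n, flatten (nseq n.+1 (A ++ D)) =
    A ++ flatten (nseq n (D ++ A)) ++ D.
  move=> A D; elim=> [|m IH]; first by rewrite /= !cats0.
  have fc : forall (x : seq T) l, flatten (x :: l) = x ++ flatten l by [].
  rewrite (_ : nseq m.+2 _ = (A ++ D) :: nseq m.+1 (A ++ D)) // fc IH.
  by rewrite (_ : nseq m.+1 _ = (D ++ A) :: nseq m (D ++ A)) // fc -!catA.
rewrite -{2}(cat_take_drop r u) claim /rot.
by apply/infixP; exists (take r u), (drop r u).
Qed.

Lemma size_chi_ge k w : 0 < k -> size w <= size (subst_word (chi k) w).
Proof.
move=> hk; elim: w => [|a w IH] //; rewrite sw_cons size_cat /=.
have : 0 < size (chi k a) by case: a.
lia.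
Qed.

Lemma size_chi_gt k w : 1 < k -> has (fun c => c != l1) w ->
  size w < size (subst_word (chi k) w).
Proof.
move=> hk; elim: w => [|a w IH] //=; rewrite sw_cons size_cat.
have := size_chi_ge w (ltnW hk).
case: a => /= h1; rewrite ?size_nseq.
- by move=> /IH h; rewrite add1n ltnS.
- move=> _; rewrite addSn ltnS; apply: leq_ltn_trans h1 _.
  rewrite -{1}[size (subst_word _ _)]add0n ltn_add2r; lia.
- move=> _; rewrite addSn ltnS; apply: leq_ltn_trans h1 _.
  rewrite -{1}[size (subst_word _ _)]add0n ltn_add2r; lia.
Qed.

Section Seq.
Variable k : nat -> nat.
Hypothesis Hk : forall i, 1 <= i -> 1 <= k i.

Definition L i w := exists n a, i <= n /\ infix w (comp_range (fun i => chi (k i)) i n a).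

Lemma L_infix i w w' : L i w -> infix w' w -> L i w'.
Proof.
move=> [n [a [hn H]]] H'; exists n, a; split => //; exact: infix_trans H' H.
Qed.

Lemma L_letter j a : 1 <= j -> L j [:: a].
Proof.
move=> hj.
have hc : forall b, comp_range (fun i => chi (k i)) j j b = chi (k j) b ++ [::].
  by move=> b; rewrite /comp_range subSnn.
have := Hk hj.
case: a => hkj.
- exists j, l2; split => //; rewrite hc infix1s /=.
  by case: (k j) hkj.
- by exists j, l1; split => //; rewrite hc infix1s /=.
- by exists j, l3; split => //; rewrite hc infix1s /=.
Qed.

Lemma L_step i w : 1 <= i -> L i w ->
  exists v, L i.+1 v /\ infix w (subst_word (chi (k i)) v).
Proof.
move=> hi [n [a [hn H]]].
move: H; rewrite /comp_range.
have -> : n.+1 - i = (n - i).+1 by lia.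
rewrite [block _ _ _.+1 _]/=.
case E: (n - i) => [|d] H.
  by exists [:: a]; split => //; apply: L_letter.
exists (block (fun i => chi (k i)) i.+1 d.+1 [:: a]); split => //.
exists n, a; split; first by rewrite -subn_gt0 E.
by rewrite /comp_range subSS E infix_refl.
Qed.

Definition P i u := 0 < size u /\ forall n, L i (flatten (nseq n u)).

Lemma P_has i u : 1 <= i -> P i u -> has (fun c => c != l1) u.
Proof.
move=> hi [hu HL].
case: (boolP (has _ u)) => // /hasPn H.
have eu : u = nseq (size u) l1.
  apply/all_pred1P/allP => x /H; by rewrite negbK.
have pw : forall n, flatten (nseq n u) = nseq (n * size u) l1.
  elim=> [|n IH] //; by rewrite [LHS]/= IH {1}eu mulSn nseqD.
have [v [_ /infixP [A [B E]]]] := L_step hi (HL (k i).+1).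
rewrite pw in E.
have := runB (chi_good (k i)) (chi_size (k i)) E.
have := leq_pmulr (k i).+1 hu. lia.
Qed.

Lemma desub i u : 1 <= i -> P i u ->
  exists u', P i.+1 u' /\ size (subst_word (chi (k i)) u') = size u.
Proof.
move=> hi Pu; have Hh := P_has hi Pu; case: Pu => hu HL.
set r := find (fun c => c != l1) u.
set u0 := rot r u.
have hr : r < size u by rewrite -has_find.
have hu0 : ok u0.
  rewrite /ok /u0 /rot (drop_nth l2 hr) /=.
  exact: (nth_find l2 Hh).
have ne0 : u0 != [::] by rewrite -size_eq0 size_rot -lt0n.
have HL0 : forall n, L i (flatten (nseq n u0)).
  move=> n; exact: L_infix (HL n.+1) (pow_rot _ _ _).
have su0 : size u0 = size u by rewrite size_rot.
clearbody u0.
set s := chi (k i).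
have gs : good s := chi_good (k i).
have inj := swI gs (chi_inj (Hk hi)).
have okP : forall n C, ok C -> ok (flatten (nseq n u0) ++ C).
  case=> [|n] C okC //=; rewrite -catA; exact: ok_cat.
have [u' Hu'] : exists u', subst_word s u' = u0.
  have [v [_ /infixP [A [B E]]]] := L_step hi (HL0 2).
  move: E; rewrite (_ : flatten (nseq 2 u0) = u0 ++ u0); last by rewrite [LHS]/= cats0.
  rewrite -!catA => E.
  have [v1 [v2 [_ [_ E2]]]] := cutL gs E (ok_cat _ hu0 ne0).
  have [w1 [w2 [_ [E3 _]]]] := cutL gs E2 (ok_cat _ hu0 ne0).
  by exists w1.
have rep : forall N v C, subst_word s v = flatten (nseq N u0) ++ C -> ok C ->
    exists r, v = flatten (nseq N u') ++ r.
  elim=> [|N IH] v C E okC; first by exists v.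
  move: E; rewrite [flatten _]/= -catA => E.
  have [v1 [v2 [-> [E1 E2]]]] := cutL gs E (okP N C okC).
  have [r' ->] := IH _ _ E2 okC.
  exists r'; have -> : v1 = u' by apply: inj; rewrite E1 Hu'.
  by rewrite /= catA.
exists u'; split; last by rewrite Hu' su0.
split.
  rewrite lt0n size_eq0; apply/eqP => e; move: ne0; by rewrite -Hu' e.
move=> n.
have [v [Lv /infixP [A [B E]]]] := L_step hi (HL0 n.+1).
move: E; rewrite pow_succ_r -!catA => E.
have [v1 [v2 [Ev [_ E2]]]] := cutL gs E (okP n _ (ok_cat B hu0 ne0)).
have [r' Er] := rep n v2 _ E2 (ok_cat B hu0 ne0).
apply: L_infix Lv _; apply/infixP; exists v1, r'.
by rewrite Ev Er.
Qed.

Lemma desub_strict i u : 1 <= i -> 1 < k i -> P i u ->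
  exists u', P i.+1 u' /\ size u' < size u.
Proof.
move=> hi hk Pu.
have [u' [Pu' E]] := desub hi Pu.
exists u'; split => //; rewrite -E.
apply: size_chi_gt => //; exact: P_has Pu'.
Qed.

Lemma desub_iter d i u : 1 <= i -> P i u ->
  exists u', P (i + d) u' /\ size u' <= size u.
Proof.
elim: d i u => [|d IH] i u hi Pu; first by exists u; rewrite addn0.
have [u1 [Pu1 E]] := desub hi Pu.
have [u2 [Pu2 E2]] := IH _ _ (leqW hi) Pu1.
exists u2; split; first by rewrite addnS -addSn.
rewrite -E; apply: leq_trans E2 _; apply: size_chi_ge; exact: Hk.
Qed.

Hypothesis Hinf : forall N, exists i, N <= i /\ 1 < k i.

Lemma P_size m i u : 1 <= i -> P i u -> m <= size u.
Proof.
elim: m i u => [|m IH] i u hi Pu //.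
have [j [hj hkj]] := Hinf i.
have [u1 [Pu1 E1]] := desub_iter (j - i) hi Pu.
rewrite subnKC in Pu1 => //.
have [u2 [Pu2 E2]] := desub_strict (leq_trans hi hj) hkj Pu1.
have := IH _ _ (leqW (leq_trans hi hj)) Pu2.
lia.
Qed.

Lemma P_false u : ~ P 1 u.
Proof. move=> Pu; have := P_size (size u).+1 (leqnn 1) Pu; lia. Qed.

End Seq.

Lemma recog s Y : good s -> comb_recognizable_rel s Y.
Proof.
move=> gs; exists 1 => w _ hw v p q [hp Ep] [hq Eq].
have key : forall p, p + size w <= size (subst_word s v) ->
    take (size w) (drop p (subst_word s v)) = w ->
    p < size (subst_word s v) /\ nth l2 (subst_word s v) p = nth l2 w 0.
  move=> p' h1 h2; split; first lia.
  by rewrite -h2 nth_take // nth_drop addn0.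
have [hp1 e1] := key p hp Ep.
have [hq1 e2] := key q hq Eq.
rewrite (cut_char gs hp1) (cut_char gs hq1) e1 e2.
by [].
Qed.

Lemma fac_add x j a b : factor x j (a + b) = factor x j a ++ factor x (j + a) b.
Proof.
apply: (@eq_from_nth _ l1); first by rewrite size_cat !size_mkseq.
move=> t; rewrite size_mkseq => ht.
rewrite nth_cat size_mkseq nth_mkseq //.
case: ltnP => h; first by rewrite nth_mkseq.
rewrite nth_mkseq; last lia.
by rewrite -addnA subnKC.
Qed.

Lemma mem_sw s w a b : a \in w -> b \in s a -> b \in subst_word s w.
Proof.
elim: w => [|c w IH] //; rewrite in_cons sw_cons mem_cat => /orP [/eqP <- -> //|/IH H /H ->].
by rewrite orbT.
Qed.

Section Prim.
Variable k : nat -> nat.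
Hypothesis Hk : forall i, 1 <= i -> 1 <= k i.
Notation tau := (fun i => chi (k i)).

Definition S13 (w : seq letter) := (l1 \in w) && (l3 \in w).
Definition S23 (w : seq letter) := (l2 \in w) && (l3 \in w).
Definition Full (w : seq letter) := [/\ l1 \in w, l2 \in w & l3 \in w].

Lemma three2 j a : l3 \in block tau j 2 [:: a].
Proof.
apply: (@mem_sw _ _ (if a is l1 then l2 else l3)).
  case: a => /=; rewrite ?cats0 /= ?in_cons ?eqxx //.
case: a => /=; rewrite ?in_cons ?eqxx //.
Qed.

Lemma s13_of3 kk w : l3 \in w -> 1 < kk -> S13 (subst_word (chi kk) w).
Proof.
move=> h3 hk; apply/andP; split; apply: (mem_sw h3) => /=.
  by rewrite in_cons mem_nseq eqxx andbT; apply/orP; right; lia.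
by rewrite in_cons eqxx.
Qed.

Lemma s13_s23 kk w : S13 w -> S23 (subst_word (chi kk) w).
Proof.
move=> /andP [h1 h3]; apply/andP; split.
  by apply: (mem_sw h1); rewrite /= in_cons eqxx.
by apply: (mem_sw h3); rewrite /= in_cons eqxx.
Qed.

Lemma s23_s13 kk w : 0 < kk -> S23 w -> S13 (subst_word (chi kk) w).
Proof.
move=> hk /andP [h2 h3]; apply/andP; split.
  by apply: (mem_sw h2); rewrite /= in_cons mem_nseq eqxx hk orbT.
by apply: (mem_sw h2); rewrite /= in_cons eqxx.
Qed.

Lemma s13_full kk w : 1 < kk -> S13 w -> Full (subst_word (chi kk) w).
Proof.
move=> hk /andP [h1 h3]; split.
- by apply: (mem_sw h3); rewrite /= in_cons mem_nseq eqxx andbT; apply/orP; right; lia.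
- by apply: (mem_sw h1); rewrite /= in_cons eqxx.
- by apply: (mem_sw h3); rewrite /= in_cons eqxx.
Qed.

Lemma full_full kk w : 0 < kk -> Full w -> Full (subst_word (chi kk) w).
Proof.
move=> hk [h1 h2 h3]; split.
- by apply: (mem_sw h2); rewrite /= in_cons mem_nseq eqxx hk orbT.
- by apply: (mem_sw h1); rewrite /= in_cons eqxx.
- by apply: (mem_sw h3); rewrite /= in_cons eqxx.
Qed.

Lemma alt d j w : 1 <= j -> S13 w -> S13 (block tau j (2 * d) w).
Proof.
elim: d j => [|d IH] j hj h; first by rewrite muln0.
rewrite mulnS block_add /=.
apply: s23_s13; first by apply: Hk; lia.
apply: s13_s23; apply: IH => //; lia.
Qed.

Lemma full_block l j w : 1 <= j -> Full w -> Full (block tau j l w).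
Proof.
elim: l j => [|l IH] j hj h //=.
apply: full_full; first exact: Hk.
apply: IH => //; lia.
Qed.

Lemma prim_main m s d : 1 <= m -> m <= s -> 1 < k s -> 1 < k (s + 1 + 2 * d) ->
  forall a, Full (comp_range tau m (s + 3 + 2 * d) a).
Proof.
move=> hm hms hs hr a.
rewrite /comp_range (_ : (s + 3 + 2 * d).+1 - m = s - m + (1 + (2 * d + (1 + 2)))); last lia.
rewrite (block_add _ _ (s - m)) subnKC // (block_add _ _ 1) (block_add _ _ (2 * d)) (block_add _ _ 1 2).
apply: full_block => //.
apply: s13_full => //.
apply: alt; first lia.
apply: s13_of3 => //.
exact: three2.
Qed.

End Prim.

Theorem proposition2p3 (k : nat -> nat) :
  infinite_type_coding k ->
  sadic_primitive (fun i => chi (k i)) /\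
  sadic_comb_recognizable (fun i => chi (k i)) /\
  sadic_aperiodic (fun i => chi (k i)).
Proof.
move=> [Hk [Hev Hod]].
split; [|split].
- move=> m hm.
  have [q [hq [q1 [qe hkq]]]] := Hev m.
  have [p [hp [po hkp]]] := Hod m.
  have gen : forall s r, m <= s -> s < r -> odd (r - s) -> 1 < k s -> 1 < k r ->
      exists n, m <= n /\ forall a b, b \in comp_range (fun i => chi (k i)) m n a.
    move=> s r hs hsr ho hks hkr.
    have := odd_double_half (r - s); rewrite ho -muln2.
    move: ((r - s)./2) => d hd.
    have er : r = s + 1 + 2 * d by lia.
    exists (s + 3 + 2 * d); split; first lia.
    move=> a b.
    rewrite er in hkr.
    have [h1 h2 h3] := prim_main Hk hm hs hks hkr a.
    by case: b.
  case: (ltngtP p q) => h.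
  + apply: (gen p q) => //; rewrite oddB ?(ltnW h) // po.
    by move: qe; case: (odd q).
  + apply: (gen q p) => //; rewrite oddB ?(ltnW h) // po.
    by move: qe; case: (odd q).
  + by move: po qe; rewrite h => ->.
- move=> i hi; apply: recog; exact: chi_good.
- move=> [x [p [Hx [hp Hper]]]].
  have Hinf : forall N, exists i, N <= i /\ 1 < k i.
    by move=> N; have [i [h1 [_ [_ h2]]]] := Hev N; exists i.
  apply: (P_false Hk Hinf (u := factor x 0 p)); split; first by rewrite size_mkseq.
  have per : forall len, factor x p len = factor x 0 len.
    by move=> len; apply: eq_mkseq => t /=; rewrite Hper.
  have pw : forall n, factor x 0 (n * p) = flatten (nseq n (factor x 0 p)).
    elim=> [|n IH] //.
    by rewrite mulSn fac_add add0n per IH.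
  move=> n; rewrite -pw.
  have [x' [j [acc E]]] := Hx (n * p).
  have [n' [a [hn' Hpre]]] := acc (j + n * p).
  exists n', a; split => //.
  rewrite E; apply: infix_prefix_trans Hpre.
  by rewrite fac_add add0n suffix_infix.
Qed.
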